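(* In the online ADDIS setting of the context, assume the $p$-values $P_1,P_2,\dots$ are independent, let $T\in\mathbb N$ and let $g:\{0,1\}^T\to\mathbb R$ be coordinatewise nondecreasing. Assume $\alpha_t$, $\lambda_t$ and $1-\tau_t$ are monotonic functions of the past for all $t$, and $\alpha_t\le\lambda_t<\tau_t$ for all $t$. Then for any $t\le T$ with $t\in\mathcal H_0$ whose null $p$-value is conditionally uniformly conservative, $$\mathbb E\Big[\frac{\alpha_t\mathbf 1\{\lambda_t<P_t\le\tau_t\}}{(\tau_t-\lambda_t)(g(R_{1:T})\vee1)}\,\Big|\,\mathcal F^{t-1},S_t=1\Big]\ \ge\ \mathbb E\Big[\frac{\alpha_t}{\tau_t(g(R_{1:T})\vee1)}\,\Big|\,\mathcal F^{t-1},S_t=1\Big]\ \ge\ \mathbb E\Big[\frac{\mathbf 1\{P_t\le\alpha_t\}}{g(R_{1:T})\vee1}\,\Big|\,\mathcal F^{t-1},S_t=1\Big].$$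
   Context: Let $P_1,P_2,\dots$ be $p$-values, $\mathcal H_0\subseteq\mathbb N$ the set of true null indices. Sequences $\{\alpha_j\},\{\lambda_j\},\{\tau_j\}$ in $[0,1]$ define $S_j=\mathbf 1\{P_j\le\tau_j\}$, $C_j=\mathbf 1\{P_j\le\lambda_j\}$, $R_j=\mathbf 1\{P_j\le\alpha_j\}$; $R_{1:T}=(R_1,\dots,R_T)$; $\mathcal F^t=\sigma(R_{1:t},C_{1:t},S_{1:t})$, $\mathcal F^0$ trivial; $\alpha_t,\lambda_t,\tau_t$ are deterministic functions of $(R_{1:t-1},C_{1:t-1},S_{1:t-1})$. Such a function is a monotonic function of the past if it is coordinatewise nondecreasing in each $R_i$ and $C_i$ and coordinatewise nonincreasing in each $S_i$. The null $p$-value $P_t$ is conditionally uniformly conservative if for all $x,\tau\in(0,1)$, $\Pr(P_t/\tau\le x\mid P_t\le\tau,\mathcal F^{t-1})\le x$. *)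

(* Defs.v *)
From HB Require Import structures.
From mathcomp Require Import all_boot all_order all_algebra.
From mathcomp Require Import all_classical all_reals all_analysis.
Set Implicit Arguments. Unset Strict Implicit. Unset Printing Implicit Defensive.
Import Order.TTheory GRing.Theory Num.Theory.
Local Open Scope classical_set_scope.
Local Open Scope ring_scope.

(* Indices are 0-based: the paper's P_1, P_2, ... are p 0, p 1, ... *)

(* A history (R_i, C_i, S_i)_{i < t} is a list of triples of booleans,
   in the order (R_i, C_i, S_i). *)
Definition history := seq (bool * bool * bool).

(* Given the deterministic rules alpha, lambda, tau (functions of the past;
   time t is the length of the history) and realized p-values p,
   hist t = (R_i, C_i, S_i)_{i < t}. *)
Fixpoint hist {R : realType} (alpha lambda tau : history -> R)
    (p : nat -> R) (t : nat) : history :=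
  match t with
  | 0 => [::]
  | t'.+1 =>
      let h := hist alpha lambda tau p t' in
      rcons h ((p t' <= alpha h), (p t' <= lambda h), (p t' <= tau h))
  end.

Definition Rdec {R : realType} (alpha lambda tau : history -> R)
    (p : nat -> R) (t : nat) : bool :=
  p t <= alpha (hist alpha lambda tau p t).

Definition Rvec {R : realType} (alpha lambda tau : history -> R)
    (p : nat -> R) (T : nat) : {ffun 'I_T -> bool} :=
  [ffun i : 'I_T => Rdec alpha lambda tau p i].

Definition hist_le (h h' : history) : Prop :=
  size h = size h' /\
  forall i, (i < size h)%N ->
    let: (r, c, s) := nth (false, false, false) h i in
    let: (r', c', s') := nth (false, false, false) h' i in
    [&& r ==> r', c ==> c' & s' ==> s].

Definition monotone_past {R : realType} (f : history -> R) : Prop :=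
  forall h h', hist_le h h' -> f h <= f h'.

Definition coord_nondecr {R : realType} (T : nat)
    (g : {ffun 'I_T -> bool} -> R) : Prop :=
  forall b b' : {ffun 'I_T -> bool}, (forall i, b i ==> b' i) -> g b <= g b'.

Definition mutually_independent {d : measure_display} {Omega : measurableType d}
    {R : realType} (P : probability Omega R) (X : nat -> Omega -> R) : Prop :=
  forall (I : seq nat), uniq I ->
  forall B : nat -> set R, (forall i, measurable (B i)) ->
  P (\big[setI/setT]_(i <- I) (X i @^-1` B i)) =
  (\prod_(i <- I) P (X i @^-1` B i))%E.

(* elementary conditional expectation E[f | A] of a nonnegative real function
   given an event A with P A > 0 *)
Definition cexp {d : measure_display} {Omega : measurableType d}
    {R : realType} (P : probability Omega R) (A : set Omega)
    (f : Omega -> R) : \bar R :=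
  ((\int[P]_(w in A) (f w)%:E) * ((fine (P A))^-1)%:E)%E.

Definition cprob {d : measure_display} {Omega : measurableType d}
    {R : realType} (P : probability Omega R) (A B : set Omega) : \bar R :=
  (P (A `&` B) * ((fine (P A))^-1)%:E)%E.

(* The event {(R,C,S)_{1:t-1} = h}, an atom of F^{t-1}. *)
Definition hist_event {d : measure_display} {Omega : measurableType d}
    {R : realType} (alpha lambda tau : history -> R)
    (X : nat -> Omega -> R) (t : nat) (h : history) : set Omega :=
  [set w | hist alpha lambda tau (fun i => X i w) t = h].

(* Conditional uniform conservativeness of P_t: for x, tau in (0,1),
   Pr(P_t / tau <= x | P_t <= tau, F^{t-1}) <= x, i.e. on every atom
   {hist_t = h} of F^{t-1} for which the conditioning event has positive
   probability. *)
Definition cond_unif_conservative {d : measure_display} {Omega : measurableType d}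
    {R : realType} (P : probability Omega R) (alpha lambda tau : history -> R)
    (X : nat -> Omega -> R) (t : nat) : Prop :=
  forall x tau0 : R, 0 < x < 1 -> 0 < tau0 < 1 ->
  forall h : history,
    let A := hist_event alpha lambda tau X t h `&` [set w | X t w <= tau0] in
    (0 < P A)%E ->
    (cprob P A [set w | (X t w / tau0 <= x)%R] <= x%:E)%E.

(* Main.v *)
Require Import Defs.
From HB Require Import structures.
From mathcomp Require Import all_boot all_order all_algebra.
From mathcomp Require Import all_classical all_reals all_analysis.
From mathcomp Require Import measurable_realfun.
From mathcomp Require Import ring lra.
Import Order.TTheory GRing.Theory Num.Theory.
Local Open Scope classical_set_scope.
Local Open Scope ring_scope.
Definition trip {R : realType} (alpha lambda tau : history -> R) (x : R) (h : history)
  : bool * bool * bool := (x <= alpha h, x <= lambda h, x <= tau h).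

Lemma histS {R : realType} (alpha lambda tau : history -> R) p n :
  hist alpha lambda tau p n.+1 =
  rcons (hist alpha lambda tau p n) (trip alpha lambda tau (p n) (hist alpha lambda tau p n)).
Proof. by []. Qed.

Lemma size_hist {R : realType} (alpha lambda tau : history -> R) p n :
  size (hist alpha lambda tau p n) = n.
Proof. by elim: n => [//|n IH]; rewrite histS size_rcons IH. Qed.

Lemma hist_ext {R : realType} (alpha lambda tau : history -> R) p p' n :
  (forall i, (i < n)%N -> p i = p' i) ->
  hist alpha lambda tau p n = hist alpha lambda tau p' n.
Proof.
elim: n => [//|n IH] Hp; rewrite !histS IH; last by move=> i Hi; apply: Hp; apply: ltnW.
by rewrite Hp.
Qed.

Lemma take_hist {R : realType} (alpha lambda tau : history -> R) p m n :
  (m <= n)%N -> take m (hist alpha lambda tau p n) = hist alpha lambda tau p m.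
Proof.
elim: n => [|n IH]; first by rewrite leqn0 => /eqP ->.
rewrite leq_eqVlt => /orP [/eqP ->|Hm].
  by rewrite take_oversize // size_hist.
rewrite histS -cats1 take_cat size_hist.
by rewrite ltnS in Hm; rewrite ltn_neqAle Hm andbT; case: eqP => [->|_];
  [rewrite subnn take0 cats0 take_oversize ?size_hist|rewrite IH].
Qed.

Lemma nth_hist {R : realType} (alpha lambda tau : history -> R) p n i d :
  (i < n)%N -> nth d (hist alpha lambda tau p n) i =
  trip alpha lambda tau (p i) (hist alpha lambda tau p i).
Proof.
elim: n => [//|n IH] Hi; rewrite histS nth_rcons size_hist.
rewrite ltnS leq_eqVlt in Hi; case/orP: Hi => [/eqP ->|Hi].
  by rewrite ltnn eqxx.
by rewrite Hi IH.
Qed.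

Lemma Rvec_hist {R : realType} (alpha lambda tau : history -> R) p T d :
  Rvec alpha lambda tau p T =
  [ffun i : 'I_T => (nth d (hist alpha lambda tau p T) i).1.1].
Proof.
by apply/ffunP => i; rewrite !ffunE nth_hist.
Qed.

Lemma hist_agree {R : realType} (alpha lambda tau : history -> R) p p' t n :
  (forall i, i != t -> p i = p' i) ->
  trip alpha lambda tau (p t) (hist alpha lambda tau p t) =
  trip alpha lambda tau (p' t) (hist alpha lambda tau p t) ->
  hist alpha lambda tau p n = hist alpha lambda tau p' n.
Proof.
move=> Hp Ht; elim: n => [//|n IH]; rewrite !histS -IH.
case: (eqVneq n t) => [->|Hn]; first by rewrite Ht.
by rewrite Hp.
Qed.

Lemma hist_le_rcons (h h' : history) r c s r' c' s' :
  hist_le h h' -> [&& r ==> r', c ==> c' & s' ==> s] ->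
  hist_le (rcons h (r, c, s)) (rcons h' (r', c', s')).
Proof.
move=> [Hs Hn] He; split; first by rewrite !size_rcons Hs.
move=> i; rewrite size_rcons ltnS leq_eqVlt => /orP [/eqP ->|Hi].
  by rewrite !nth_rcons -Hs !ltnn !eqxx.
by rewrite !nth_rcons -Hs Hi; apply: Hn.
Qed.

Lemma hist_mono {R : realType} (alpha lambda tau : history -> R) p p' t n :
  monotone_past alpha -> monotone_past lambda -> monotone_past (fun h => 1 - tau h) ->
  (forall i, i != t -> p i = p' i) -> p' t <= p t ->
  p t <= tau (hist alpha lambda tau p t) ->
  hist_le (hist alpha lambda tau p n) (hist alpha lambda tau p' n).
Proof.
move=> Ma Ml Mt Hp Hle Hs.
elim: n => [|n IH]; first by split.
rewrite !histS /trip; apply: hist_le_rcons => //.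
have Ha := Ma _ _ IH; have Hl := Ml _ _ IH; have Ht := Mt _ _ IH.
have Ht' : tau (hist alpha lambda tau p' n) <= tau (hist alpha lambda tau p n).
  by move: Ht; rewrite lerD2l lerN2.
have Hpn : p' n <= p n by case: (eqVneq n t) => [->//|Hn]; rewrite Hp.
apply/and3P; split; apply/implyP => H.
- by apply: le_trans Ha; apply: le_trans H.
- by apply: le_trans Hl; apply: le_trans H.
case: (eqVneq n t) => [En|Hn].
  by rewrite En.
by rewrite Hp //; apply: le_trans Ht'.
Qed.

Lemma Rvec_mono {R : realType} (alpha lambda tau : history -> R) p p' t T :
  monotone_past alpha -> monotone_past lambda -> monotone_past (fun h => 1 - tau h) ->
  (forall i, i != t -> p i = p' i) -> p' t <= p t ->
  p t <= tau (hist alpha lambda tau p t) ->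
  forall i, Rvec alpha lambda tau p T i ==> Rvec alpha lambda tau p' T i.
Proof.
move=> Ma Ml Mt Hp Hle Hs i; rewrite !ffunE /Rdec; apply/implyP => H.
have Ha := Ma _ _ (hist_mono alpha lambda tau p p' t i Ma Ml Mt Hp Hle Hs).
have Hpn : p' i <= p i by case: (eqVneq (nat_of_ord i) t) => [->//|Hn]; rewrite Hp.
by apply: le_trans Ha; apply: le_trans H.
Qed.
Arguments hist : simpl never.
Definition rect {d : measure_display} {Omega : measurableType d} {R : realType}
  (X : nat -> Omega -> R) (T : nat) (Bs : nat -> set R) : set Omega :=
  \big[setI/setT]_(i <- iota 0 T) (X i @^-1` Bs i).

Lemma in_bigsetI {Omega : Type} (s : seq nat) (F : nat -> set Omega) w :
  (\big[setI/setT]_(i <- s) F i) w <-> (forall i, i \in s -> F i w).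
Proof.
elim: s => [|a s IH]; first by rewrite big_nil; split.
rewrite big_cons; split.
  move=> [Ha Hs] i; rewrite in_cons => /orP [/eqP ->//|Hi].
  by move/IH: Hs; apply.
move=> H; split; first by apply: H; rewrite in_cons eqxx.
by apply/IH => i Hi; apply: H; rewrite in_cons Hi orbT.
Qed.

Lemma in_rect {d : measure_display} {Omega : measurableType d} {R : realType}
  (X : nat -> Omega -> R) T Bs w :
  rect X T Bs w <-> (forall i, (i < T)%N -> Bs i (X i w)).
Proof.
rewrite /rect in_bigsetI; split => H i Hi; apply: H; by rewrite mem_iota add0n in Hi *.
Qed.

Lemma measurable_rect {d : measure_display} {Omega : measurableType d} {R : realType}
  (X : nat -> Omega -> R) T Bs :
  (forall i, measurable_fun setT (X i)) -> (forall i, measurable (Bs i)) ->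
  measurable (rect X T Bs).
Proof.
move=> mX mB; rewrite /rect; elim: (iota 0 T) => [|a s IH]; first by rewrite big_nil.
rewrite big_cons; apply: measurableI => //.
by rewrite -[X a @^-1` _]setTI; apply: mX.
Qed.

Lemma measurable_le_eq {R : realType} (c : R) (b : bool) :
  measurable [set y : R | (y <= c) = b].
Proof.
case: b.
  rewrite (_ : [set y | _] = [set` `]-oo, c]]); first exact: measurable_itv.
  by apply/seteqP; split => y /=; rewrite in_itv /=.
rewrite (_ : [set y | _] = [set` `]c, +oo[]); first exact: measurable_itv.
by apply/seteqP; split => y /=; rewrite in_itv /= andbT ?ltNge; [move=>->|move/negbTE].
Qed.

Lemma measurable_trip {R : realType} (alpha lambda tau : history -> R) H e :
  measurable [set y : R | trip alpha lambda tau y H = e].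
Proof.
rewrite (_ : [set y | _] = [set y : R | (y <= alpha H) = e.1.1] `&`
  ([set y : R | (y <= lambda H) = e.1.2] `&` [set y : R | (y <= tau H) = e.2])).
  by apply: measurableI; [|apply: measurableI]; apply: measurable_le_eq.
apply/seteqP; split => y /=; rewrite /trip.
  by move=> <-.
by case: e => [[r c] s] /= [-> [-> ->]].
Qed.

Definition px {Omega : Type} {R : realType} (X : nat -> Omega -> R) (t : nat) (x : R)
  (w : Omega) : nat -> R := fun i => if i == t then x else X i w.

Lemma hist_rect {d : measure_display} {Omega : measurableType d} {R : realType}
  (X : nat -> Omega -> R) (alpha lambda tau : history -> R) (T t : nat) (x : R) n :
  (n <= T)%N -> forall H, size H = n ->
  exists Bs : nat -> set R, (forall i, measurable (Bs i)) /\
    (Bs t = setT \/ Bs t = set0) /\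
    [set w | hist alpha lambda tau (px X t x w) n = H] = rect X T Bs.
Proof.
elim: n => [|n IH] Hn H.
  move/size0nil ->; exists (fun _ => setT); split => //; split; first by left.
  by apply/seteqP; split => w //= _; apply/in_rect.
case/lastP: H => [//|H' e]; rewrite size_rcons => -[Hs].
have [Bs [mB [Bt EB]]] := IH (ltnW Hn) H' Hs.
case: (eqVneq n t) => [Ent|Hnt].
- exists (fun i => if i == t then (if trip alpha lambda tau x H' == e then Bs t else set0)
    else Bs i); split.
    by move=> i; case: eqP => // _; case: eqP.
  split.
    by rewrite eqxx; case: eqP => _ //; right.
  apply/seteqP; split => w /=.
    rewrite histS => /eqP; rewrite eqseq_rcons => /andP [/eqP Hh /eqP He].
    have Hr : rect X T Bs w by rewrite -EB.
    apply/in_rect => i Hi; case: eqP => [->|_]; last by move/in_rect: Hr; apply.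
    move: He; rewrite Hh /px Ent eqxx => ->; rewrite eqxx.
    by move/in_rect: Hr; apply; rewrite -Ent.
  move/in_rect => Hr.
  have Hw : rect X T Bs w.
    apply/in_rect => i Hi; move: (Hr i Hi); case: eqP => [->|//].
    by case: eqP.
  have : [set w | hist alpha lambda tau (px X t x w) n = H'] w by rewrite EB.
  move=> /= Hh; rewrite histS Hh; congr rcons.
  have Ht : (t < T)%N by rewrite -Ent.
  move: (Hr t Ht); rewrite eqxx /px -Ent eqxx.
  by case: eqP => // _; rewrite /set0.
- exists (fun i => if i == n then Bs n `&` [set y | trip alpha lambda tau y H' = e]
    else Bs i); split.
    move=> i; case: eqP => _ //; apply: measurableI => //; exact: measurable_trip.
  split; first by rewrite eq_sym (negbTE Hnt).
  apply/seteqP; split => w /=.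
    rewrite histS => /eqP; rewrite eqseq_rcons => /andP [/eqP Hh /eqP He].
    have Hr : rect X T Bs w by rewrite -EB.
    apply/in_rect => i Hi; case: eqP => [->|_]; last by move/in_rect: Hr; apply.
    split; first by move/in_rect: Hr; apply.
    by move: He; rewrite Hh /px (negbTE Hnt).
  move/in_rect => Hr.
  have Hw : rect X T Bs w.
    apply/in_rect => i Hi; move: (Hr i Hi); case: eqP => [->|//].
    by case.
  have : [set w | hist alpha lambda tau (px X t x w) n = H'] w by rewrite EB.
  move=> /= Hh; rewrite histS Hh; congr rcons.
  have := Hr n Hn; rewrite eqxx => -[_]; by rewrite /px (negbTE Hnt).
Qed.

Lemma rect_indep {d : measure_display} {Omega : measurableType d} {R : realType}
  (P : probability Omega R) (X : nat -> Omega -> R) (T t : nat) Bs B :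
  (forall i, measurable_fun setT (X i)) -> mutually_independent P X ->
  (t < T)%N -> (forall i, measurable (Bs i)) -> (Bs t = setT \/ Bs t = set0) ->
  measurable B ->
  P (X t @^-1` B `&` rect X T Bs) = (P (X t @^-1` B) * P (rect X T Bs))%E.
Proof.
move=> mX MI Ht mB Bt mBB.
pose Bs' := fun i => if i == t then Bs t `&` B else Bs i.
have -> : X t @^-1` B `&` rect X T Bs = rect X T Bs'.
  apply/seteqP; split => w /=.
    move=> [HB /in_rect Hr]; apply/in_rect => i Hi; rewrite /Bs'.
    by case: eqP => [->|_]; [split; [apply: Hr|]|apply: Hr].
  move/in_rect => Hr; split.
    by move: (Hr t Ht); rewrite /Bs' eqxx => -[].
  apply/in_rect => i Hi; move: (Hr i Hi); rewrite /Bs'.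
  by case: eqP => [->|//] [].
have mB' : forall i, measurable (Bs' i).
  by move=> i; rewrite /Bs'; case: eqP => // _; apply: measurableI.
rewrite /rect (MI _ (iota_uniq 0 T) _ mB') (MI _ (iota_uniq 0 T) _ mB).
have tin : t \in iota 0 T by rewrite mem_iota.
rewrite (bigD1_seq t tin (iota_uniq 0 T)) (bigD1_seq t tin (iota_uniq 0 T)) /=.
rewrite [X in (_ * X)%E](eq_bigr (fun i => P (X i @^-1` Bs i))); last first.
  by move=> i /negbTE Hi; rewrite /Bs' Hi.
rewrite /Bs' eqxx.
case: Bt => ->.
  by rewrite setTI preimage_setT probability_setT mul1e.
by rewrite set0I preimage_set0 measure0 !mul0e mule0.
Qed.
Definition SH {d : measure_display} {Omega : measurableType d} {R : realType}
  (X : nat -> Omega -> R) (alpha lambda tau : history -> R) (T t : nat) (x : R)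
  (H : history) : set Omega :=
  [set w | hist alpha lambda tau (px X t x w) T = H].

Lemma measurable_SH {d : measure_display} {Omega : measurableType d} {R : realType}
  (X : nat -> Omega -> R) (alpha lambda tau : history -> R) (T t : nat) (x : R) H :
  (forall i, measurable_fun setT (X i)) ->
  measurable (SH X alpha lambda tau T t x H).
Proof.
move=> mX; case: (eqVneq (size H) T) => [/eqP HT|HT].
  rewrite /SH; have [Bs [mB [_ ->]]] := hist_rect X alpha lambda tau T t x T (leqnn T) H (eqP HT).
  exact: measurable_rect.
rewrite (_ : SH _ _ _ _ _ _ _ _ = set0) //.
apply/seteqP; split => w //= Hw; move: HT; by rewrite -Hw size_hist eqxx.
Qed.

Lemma int_simple {d : measure_display} {Omega : measurableType d} {R : realType}
  (P : probability Omega R)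
  (X : nat -> Omega -> R) (alpha lambda tau : history -> R) (T t : nat) (x : R)
  (Phi : history -> R) D :
  (forall i, measurable_fun setT (X i)) -> measurable D ->
  (forall H, 0 <= Phi H) ->
  (\int[P]_(w in D) (Phi (hist alpha lambda tau (px X t x w) T))%:E =
   \sum_(H <- index_enum (T.-tuple (bool * bool * bool)))
     ((Phi H)%:E * P (SH X alpha lambda tau T t x H `&` D)))%E.
Proof.
move=> mX mD Phi0.
set TT := (T.-tuple (bool * bool * bool)).
have Hpt : forall w, (Phi (hist alpha lambda tau (px X t x w) T))%:E =
  (\sum_(H <- index_enum TT)
    ((Phi H) * \1_(SH X alpha lambda tau T t x H) w)%:E)%E.
  move=> w; rewrite sumEFin; congr EFin.
  have Hs : size (hist alpha lambda tau (px X t x w) T) == T by rewrite size_hist.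
  pose H0 : TT := Tuple Hs.
  rewrite (bigD1_seq H0) ?mem_index_enum ?index_enum_uniq //= big1_seq.
    by rewrite addr0 indicE mem_set ?mulr1.
  move=> H /andP [HH _]; rewrite indicE memNset ?mulr0 //.
  move=> /= E; move: HH; suff -> : H = H0 by rewrite eqxx.
  by apply: val_inj; rewrite /= E.
rewrite (eq_integral (fun w => (\sum_(H <- index_enum TT)
    ((Phi H) * \1_(SH X alpha lambda tau T t x H) w)%:E)%E)); last first.
  by move=> w _; rewrite Hpt.
rewrite ge0_integral_sum //; last first.
- by move=> H w _; rewrite lee_fin mulr_ge0.
- move=> H; apply/measurable_realfun.measurable_EFinP.
  apply: measurable_realfun.measurable_funM => //.
  exact/measurable_realfun.measurable_indic/measurable_SH.
apply: eq_bigr => H _.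
rewrite (integralZl_indic _ (fun _ => SH X alpha lambda tau T t x H)) //.
- by rewrite integral_indic //; apply: measurable_SH.
- by move=> /lt_geF; rewrite Phi0.
- exact: measurable_SH.
Qed.
Lemma hist_px {Omega : Type} {R : realType} (X : nat -> Omega -> R)
  (alpha lambda tau : history -> R) t x w :
  hist alpha lambda tau (fun i => X i w) t = hist alpha lambda tau (px X t x w) t.
Proof. by apply: hist_ext => i Hi; rewrite /px (ltn_eqF Hi). Qed.

Lemma measurable_E {d : measure_display} {Omega : measurableType d} {R : realType}
  (X : nat -> Omega -> R) (alpha lambda tau : history -> R) (T t : nat) h :
  (forall i, measurable_fun setT (X i)) -> (t < T)%N -> size h = t ->
  measurable [set w | hist alpha lambda tau (fun i => X i w) t = h].
Proof.
move=> mX Ht Hh.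
rewrite (_ : [set w | _] = [set w | hist alpha lambda tau (px X t 0 w) t = h]); last first.
  by apply/seteqP; split => w /=; rewrite (hist_px _ _ _ _ _ 0).
have [Bs [mB [_ ->]]] := hist_rect X alpha lambda tau T t 0 t (ltnW Ht) h Hh.
exact: measurable_rect.
Qed.

Lemma key_indep {d : measure_display} {Omega : measurableType d} {R : realType}
  (P : probability Omega R)
  (X : nat -> Omega -> R) (alpha lambda tau : history -> R) (T t : nat) (x : R)
  (h : history) (B : set R) (Phi : history -> R) :
  (forall i, measurable_fun setT (X i)) -> mutually_independent P X ->
  (t < T)%N -> size h = t -> measurable B -> (forall H, 0 <= Phi H) ->
  let E := [set w | hist alpha lambda tau (fun i => X i w) t = h] in
  (\int[P]_(w in E `&` X t @^-1` B) (Phi (hist alpha lambda tau (px X t x w) T))%:E =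
   P (X t @^-1` B) * \int[P]_(w in E) (Phi (hist alpha lambda tau (px X t x w) T))%:E)%E.
Proof.
move=> mX MI Ht Hh mB Phi0 E.
have mE : measurable E by apply: measurable_E.
have mXB : measurable (X t @^-1` B) by rewrite -[X t @^-1` B]setTI; apply: mX.
rewrite !int_simple //; last exact: measurableI.
rewrite ge0_sume_distrr; last first.
  by move=> H _; apply: mule_ge0; rewrite ?lee_fin ?Phi0 ?measure_ge0.
apply: eq_bigr => H _; rewrite muleCA; congr (_ * _)%E.
have HT : size (val H) = T by rewrite size_tuple.
have [Bs [mBs [Bt EB]]] := hist_rect X alpha lambda tau T t x T (leqnn T) _ HT.
have HE : forall w, SH X alpha lambda tau T t x H w -> E w = (take t H = h).
  move=> w Hw; rewrite /E /= (hist_px _ _ _ _ _ x) -Hw take_hist //; exact: ltnW.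
case: (eqVneq (take t H) h) => [Et|Nt].
- rewrite (_ : SH _ _ _ _ _ _ _ _ `&` E = SH X alpha lambda tau T t x H); last first.
    apply/seteqP; split => w /=; first by case.
    by move=> Hw; split => //; rewrite HE.
  rewrite (_ : SH _ _ _ _ _ _ _ _ `&` _ = X t @^-1` B `&` SH X alpha lambda tau T t x H); last first.
    apply/seteqP; split => w /=; first by move=> [Hw [_ HB]].
    by move=> [HB Hw]; split => //; split => //; rewrite HE.
  rewrite /SH EB; exact: rect_indep.
- rewrite (_ : SH _ _ _ _ _ _ _ _ `&` E = set0); last first.
    apply/seteqP; split => w //= [Hw]; by rewrite HE // => /eqP; rewrite (negbTE Nt).
  rewrite measure0 mule0 -(measure0 P); congr (P _).
  apply/seteqP; split => w //= [Hw []]; by rewrite HE // => /eqP; rewrite (negbTE Nt).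
Qed.
Lemma simple_repr {d : measure_display} {Omega : measurableType d} {R : realType}
  (X : nat -> Omega -> R) (alpha lambda tau : history -> R) (T t : nat) (x : R)
  (Phi : history -> R) w :
  Phi (hist alpha lambda tau (px X t x w) T) =
  \sum_(H <- index_enum (T.-tuple (bool * bool * bool)))
    (Phi H * \1_(SH X alpha lambda tau T t x H) w).
Proof.
have Hs : size (hist alpha lambda tau (px X t x w) T) == T by rewrite size_hist.
pose H0 : T.-tuple (bool * bool * bool) := Tuple Hs.
rewrite (bigD1_seq H0) ?mem_index_enum ?index_enum_uniq //= big1_seq.
  by rewrite addr0 indicE mem_set ?mulr1.
move=> H /andP [HH _]; rewrite indicE memNset ?mulr0 //.
move=> /= E; move: HH; suff -> : H = H0 by rewrite eqxx.
by apply: val_inj; rewrite /= E.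
Qed.

Lemma measurable_phi {d : measure_display} {Omega : measurableType d} {R : realType}
  (X : nat -> Omega -> R) (alpha lambda tau : history -> R) (T t : nat) (x : R)
  (Phi : history -> R) D :
  (forall i, measurable_fun setT (X i)) ->
  measurable_fun D (fun w => Phi (hist alpha lambda tau (px X t x w) T)).
Proof.
move=> mX.
rewrite (_ : (fun w => _) = (fun w => \sum_(H <- index_enum (T.-tuple (bool * bool * bool)))
    (Phi H * \1_(SH X alpha lambda tau T t x H) w))); last first.
  by apply: funext => w; apply: simple_repr.
apply: measurable_sum => H.
apply: measurable_realfun.measurable_funM => //.
exact/measurable_realfun.measurable_indic/measurable_SH.
Qed.

Lemma measurable_hist {d : measure_display} {Omega : measurableType d} {R : realType}
  (X : nat -> Omega -> R) (alpha lambda tau : history -> R) (T : nat)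
  (Phi : history -> R) D :
  (forall i, measurable_fun setT (X i)) ->
  measurable_fun D (fun w => Phi (hist alpha lambda tau (fun i => X i w) T)).
Proof.
move=> mX.
rewrite (_ : (fun w => _) = (fun w => Phi (hist alpha lambda tau (px X T 0 w) T))).
  exact: measurable_phi.
apply: funext => w; congr Phi; apply: hist_ext => i Hi; by rewrite /px (ltn_eqF Hi).
Qed.

Lemma piece {d : measure_display} {Omega : measurableType d} {R : realType}
  (P : probability Omega R)
  (X : nat -> Omega -> R) (alpha lambda tau : history -> R) (T t : nat) (x : R)
  (h : history) (B : set R) (Phi : history -> R) (c : R) (F : Omega -> R) :
  (forall i, measurable_fun setT (X i)) -> mutually_independent P X ->
  (t < T)%N -> size h = t -> measurable B -> (forall H, 0 <= Phi H) -> 0 <= c ->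
  let E := [set w | hist alpha lambda tau (fun i => X i w) t = h] in
  (forall w, E w -> B (X t w) -> F w = c * Phi (hist alpha lambda tau (px X t x w) T)) ->
  (\int[P]_(w in E `&` X t @^-1` B) (F w)%:E =
   c%:E * (P (X t @^-1` B) * \int[P]_(w in E) (Phi (hist alpha lambda tau (px X t x w) T))%:E))%E.
Proof.
move=> mX MI Ht Hh mB Phi0 c0 E HF.
have mE : measurable E by apply: measurable_E.
have mXB : measurable (X t @^-1` B) by rewrite -[X t @^-1` B]setTI; apply: mX.
rewrite (eq_integral (fun w => c%:E * (Phi (hist alpha lambda tau (px X t x w) T))%:E)%E); last first.
  by move=> w; rewrite inE => -[Ew Bw]; rewrite HF.
rewrite ge0_integralZl_EFin //; first by rewrite key_indep.
- by apply: measurableI.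
- by move=> w _; rewrite lee_fin.
- exact/measurable_realfun.measurable_EFinP/measurable_phi.
Qed.
Lemma sup_aux {R : realType} (y z c : R) :
  0 <= y -> c < 1 -> (forall t0, c < t0 < 1 -> t0 * y <= z) -> y <= z.
Proof.
move=> y0 c1 H.
have [yE|yp] := eqVneq y 0.
  rewrite yE; have := H ((c + 1) / 2); rewrite yE mulr0; apply; apply/andP; split; lra.
have {}yp : 0 < y by rewrite lt_neqAle eq_sym yp y0.
rewrite leNgt; apply/negP => zy.
set m := Num.max c (z / y).
have m1 : m < 1.
  rewrite /m gt_max c1 /=; rewrite ltr_pdivrMr // mul1r //.
have cm : c <= m by rewrite /m le_max lexx.
have zm : z / y <= m by rewrite /m le_max lexx orbT.
have := H ((m + 1) / 2); rewrite (_ : c < (m + 1) / 2 < 1); last by apply/andP; split; lra.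
move=> /(_ isT) Hz.
have : z < (m + 1) / 2 * y.
  rewrite -ltr_pdivrMr //; apply: le_lt_trans zm _; lra.
by rewrite ltNge Hz.
Qed.

Lemma cons_aux {R : realType} (f : R -> R) :
  (forall x y, x <= y -> f x <= f y) -> (forall x, 0 <= f x <= 1) ->
  (forall x t0, 0 < x < 1 -> 0 < t0 < 1 -> 0 < f t0 -> f (x * t0) <= x * f t0) ->
  forall c u, 0 <= c <= u -> 0 < u <= 1 -> u * f c <= c * f u.
Proof.
move=> fm f01 H c u /andP [c0 cu] /andP [u0 u1].
have Hd : forall c' t0, 0 < c' < t0 -> t0 < 1 -> t0 * f c' <= c' * f t0.
  move=> c' t0 /andP [c'0 c't0] t01.
  have t00 : 0 < t0 by apply: lt_trans c't0.
  have [ft0|ft0] := eqVneq (f t0) 0.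
    have : f c' <= 0 by rewrite -ft0; apply: fm; apply: ltW.
    have := f01 c'; case/andP => fc0 _ fc; rewrite ft0 mulr0.
    have -> : f c' = 0 by apply/eqP; rewrite eq_le fc fc0.
    by rewrite mulr0.
  have ft0p : 0 < f t0 by rewrite lt_neqAle eq_sym ft0; case/andP: (f01 t0).
  have := H (c' / t0) t0; rewrite mulfVK ?gt_eqF //.
  have x01 : 0 < c' / t0 < 1.
    by rewrite divr_gt0 //= ltr_pdivrMr // mul1r.
  move=> /(_ x01 (introT andP (conj t00 t01)) ft0p) Hc.
  apply: le_trans (ler_wpM2l (ltW t00) Hc) _.
  by rewrite mulrA (mulrC t0) mulfVK ?gt_eqF.
have [cE|cu'] := eqVneq c u; first by rewrite cE mulrC.
have {cu'}cu : c < u by rewrite lt_neqAle cu' cu.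
have [c0E|c0'] := eqVneq c 0.
  rewrite c0E mul0r pmulr_rle0 //.
  have f00 : f 0 <= 0.
    rewrite leNgt; apply/negP => fp.
    have f1 := f01 0; case/andP: f1 => _ f1.
    have : f 0 <= f ((f 0 / 2) * (1 / 2)).
      apply: fm; apply: mulr_ge0; apply: divr_ge0 => //; exact: ltW.
    have [h12|h12] := eqVneq (f (1 / 2)) 0.
      have : f ((f 0 / 2) * (1 / 2)) <= f (1 / 2).
        by apply: fm; lra.
      rewrite h12 => Ha Hb; have := le_trans Hb Ha; by rewrite leNgt fp.
    have h12p : 0 < f (1 / 2) by rewrite lt_neqAle eq_sym h12; case/andP: (f01 (1 / 2)).
    have := H (f 0 / 2) (1 / 2).
    have xa : 0 < f 0 / 2 < 1 by apply/andP; split; lra.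
    have xb : 0 < (1 / 2 : R) < 1 by apply/andP; split; lra.
    move=> /(_ xa xb h12p) Ha Hb.
    have := le_trans Hb Ha; case/andP: (f01 (1 / 2)) => _ Hc Hd0.
    have : f 0 <= f 0 / 2 by apply: le_trans Hd0 _; rewrite ler_piMr ?divr_ge0 //; lra.
    lra.
  exact: f00.
have {c0'}c0 : 0 < c by rewrite lt_neqAle eq_sym c0' c0.
have [u1E|u1'] := eqVneq u 1; last first.
  apply: Hd; first by rewrite c0 cu.
  by rewrite lt_neqAle u1' u1.
rewrite u1E mul1r; apply: (sup_aux _ _ c).
- by case/andP: (f01 c).
- by rewrite -u1E.
move=> t0 /andP [ct0 t01].
apply: le_trans (Hd c t0 _ t01) _; first by rewrite c0 ct0.
apply: ler_wpM2l; first exact: ltW.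
apply: fm; exact: ltW.
Qed.
Lemma final_ineq {R : realType} (a l u rR rC rN v0 vl vu : R) :
  0 <= a -> a <= l -> l < u -> 0 <= l -> 0 <= rR -> 0 <= rC -> 0 <= rN ->
  0 <= v0 -> v0 <= vl -> vl <= vu ->
  u * (rR + rC) <= l * (rR + rC + rN) -> u * rR <= a * (rR + rC + rN) ->
  (a / u * (rR * v0) + a / u * (rC * vl) + a / u * (rN * vu) <=
     0 * (rR * v0) + 0 * (rC * vl) + a / (u - l) * (rN * vu))
  /\ (1 * (rR * v0) + 0 * (rC * vl) + 0 * (rN * vu) <=
     a / u * (rR * v0) + a / u * (rC * vl) + a / u * (rN * vu)).
Proof.
move=> a0 al lu l0 rR0 rC0 rN0 v00 v0l vlu H1 H2.
have u0 : 0 < u by apply: le_lt_trans lu.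
have ul0 : 0 < u - l by rewrite subr_gt0.
set S := rR + rC + rN.
have S0 : 0 <= S by rewrite /S !addr_ge0.
have vl0 : 0 <= vl by apply: le_trans v0l.
have vu0 : 0 <= vu by apply: le_trans vlu.
have k0 : 0 <= a / u by rewrite divr_ge0 // ltW.
have E1 : a / u * (rR * v0) + a / u * (rC * vl) + a / u * (rN * vu) =
  a / u * (rR * v0 + rC * vl + rN * vu) by rewrite !mulrDr.
split.
- rewrite E1 !mul0r !add0r.
  have h1 : rR * v0 + rC * vl + rN * vu <= S * vu.
    have := ler_wpM2l rR0 (le_trans v0l vlu); have := ler_wpM2l rC0 vlu; rewrite /S; lra.
  have h2 : S / u <= rN / (u - l).
    rewrite ler_pdivrMr // mulrAC ler_pdivlMr //.
    have : S * (u - l) <= rN * u.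
      rewrite /S; nra.
    by [].
  apply: le_trans (ler_wpM2l k0 h1) _.
  rewrite (_ : a / u * (S * vu) = a * (S / u) * vu); last by rewrite mulrCA !mulrA (mulrC _ S) -mulrA; congr (_ * _); rewrite mulrAC.
  rewrite (_ : a / (u - l) * (rN * vu) = a * (rN / (u - l)) * vu); last first.
    by rewrite !mulrA (mulrAC a _ rN).
  by apply: ler_wpM2r => //; apply: ler_wpM2l.
- rewrite E1 !mul0r !addr0 mul1r.
  have h1 : S * v0 <= rR * v0 + rC * vl + rN * vu.
    have := ler_wpM2l rN0 (le_trans v0l vlu); have := ler_wpM2l rC0 v0l; rewrite /S; lra.
  apply: le_trans (ler_wpM2l k0 h1).
  rewrite mulrA; apply: ler_wpM2r => //.
  by rewrite mulrAC ler_pdivlMr // mulrC.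
Qed.
Theorem lemma2 (d : measure_display) (Omega : measurableType d) (R : realType)
  (P : probability Omega R) (X : nat -> Omega -> R)
  (H0 : set nat)
  (alpha lambda tau : history -> R)
  (T : nat) (g : {ffun 'I_T -> bool} -> R)
  (t : nat) :
  (forall i, measurable_fun setT (X i)) ->
  (forall i w, 0 <= X i w <= 1) ->
  mutually_independent P X ->
  coord_nondecr g ->
  (forall h, 0 <= alpha h <= 1) ->
  (forall h, 0 <= lambda h <= 1) ->
  (forall h, 0 <= tau h <= 1) ->
  monotone_past alpha ->
  monotone_past lambda ->
  monotone_past (fun h => 1 - tau h) ->
  (forall h, alpha h <= lambda h < tau h) ->
  (t < T)%N -> t \in H0 ->
  cond_unif_conservative P alpha lambda tau X t ->
  let p w := fun i => X i w in
  let al w := alpha (hist alpha lambda tau (p w) t) in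
  let la w := lambda (hist alpha lambda tau (p w) t) in
  let ta w := tau (hist alpha lambda tau (p w) t) in
  let G w := Num.max (g (Rvec alpha lambda tau (p w) T)) 1 in
  forall h : history,
    let A := hist_event alpha lambda tau X t h `&` [set w | X t w <= ta w] in
    (0 < P A)%E ->
    (cexp P A (fun w => (al w * ((la w < X t w <= ta w)%R : bool)%:R / ((ta w - la w) * G w))%R)
      >= cexp P A (fun w => (al w / (ta w * G w))%R))%E /\
    (cexp P A (fun w => (al w / (ta w * G w))%R)
      >= cexp P A (fun w => (((X t w <= al w)%R : bool)%:R / G w)%R))%E.
Proof.
move=> mX X01 MI gmono a01 l01 t01 Ma Ml Mt alt Ht tH0 CUC p al la ta G h A PA.
set E := [set w | hist alpha lambda tau (fun i => X i w) t = h].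
have Hh : size h = t.
  case: (eqVneq (size h) t) => // Hs; exfalso; move: PA.
  rewrite (_ : A = set0) ?measure0 ?ltxx //.
  apply/seteqP; split => w //= [Ew _]; move: Hs; by rewrite -Ew size_hist eqxx.
set a := alpha h; set l := lambda h; set u := tau h.
have a0 : 0 <= a by case/andP: (a01 h).
have al' : a <= l by case/andP: (alt h).
have lu : l < u by case/andP: (alt h).
have l0 : 0 <= l by case/andP: (l01 h).
have u1 : u <= 1 by case/andP: (t01 h).
have u0 : 0 < u by apply: le_lt_trans lu.
have mE : measurable E by apply: (measurable_E X alpha lambda tau T).
have onE : forall w, E w -> al w = a /\ la w = l /\ ta w = u.
  by move=> w Ew; rewrite /al /la /ta /p Ew.
have AE : A = E `&` [set w | X t w <= u].
  apply/seteqP; split => w /= [Ew Hw]; split => //; case: (onE w Ew) => [_ [_ Hta]]; by move: Hw; rewrite /= Hta.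
set Phi := fun H : history =>
  (Num.max (g [ffun i : 'I_T => (nth (false, false, false) H i).1.1]) 1)^-1.
have Phi0 : forall H, 0 <= Phi H.
  by move=> H; rewrite invr_ge0; apply: le_trans ler01 _; rewrite le_max lexx orbT.
have GPhi : forall w, (G w)^-1 = Phi (hist alpha lambda tau (fun i => X i w) T).
  by move=> w; rewrite /G (Rvec_hist _ _ _ _ _ (false, false, false)).
have agree : forall x w, E w -> trip alpha lambda tau (X t w) h = trip alpha lambda tau x h ->
   hist alpha lambda tau (fun i => X i w) T = hist alpha lambda tau (px X t x w) T.
  move=> x w Ew Htr; apply: (hist_agree alpha lambda tau _ _ t).
    by move=> i /negbTE Hi; rewrite /px Hi.
  by rewrite Ew /px eqxx.
set BR := [set y : R | y <= a].
set BC := [set y : R | a < y <= l].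
set BN := [set y : R | l < y <= u].
have mBR : measurable BR.
  rewrite (_ : BR = [set` `]-oo, a]]); first exact: measurable_itv.
  by apply/seteqP; split => y /=; rewrite in_itv.
have mBC : measurable BC.
  rewrite (_ : BC = [set` `]a, l]]); first exact: measurable_itv.
  by apply/seteqP; split => y /=; rewrite in_itv.
have mBN : measurable BN.
  rewrite (_ : BN = [set` `]l, u]]); first exact: measurable_itv.
  by apply/seteqP; split => y /=; rewrite in_itv.
have mpre : forall B, measurable B -> measurable (X t @^-1` B).
  by move=> B mB; rewrite -[X t @^-1` B]setTI; apply: mX.
set SR := E `&` X t @^-1` BR.
set SC := E `&` X t @^-1` BC.
set SN := E `&` X t @^-1` BN.
have mSR : measurable SR by apply: measurableI => //; apply: mpre.
have mSC : measurable SC by apply: measurableI => //; apply: mpre.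
have mSN : measurable SN by apply: measurableI => //; apply: mpre.
have AU : A = (SR `|` SC) `|` SN.
  rewrite AE; apply/seteqP; split => w /=.
    move=> [Ew Hw]; case: (leP (X t w) a) => Ha; first by left; left.
    case: (leP (X t w) l) => Hl; first by left; right; split => //; rewrite /BC /= Ha Hl.
    by right; split => //; rewrite /BN /= Hl Hw.
  move=> [[[Ew Hw]|[Ew Hw]]|[Ew Hw]]; split => //.
  - by apply: le_trans Hw (le_trans al' (ltW lu)).
  - by case/andP: Hw => _ Hw; apply: le_trans Hw (ltW lu).
  - by case/andP: Hw.
have split3 : forall F : Omega -> R, (forall w, 0 <= F w) -> measurable_fun setT F ->
  (\int[P]_(w in A) (F w)%:E = \int[P]_(w in SR) (F w)%:E + \int[P]_(w in SC) (F w)%:E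
     + \int[P]_(w in SN) (F w)%:E)%E.
  move=> F F0 mF.
  have mFE : forall D, measurable_fun D (EFin \o F).
    move=> D; apply/measurable_realfun.measurable_EFinP.
    exact: measurable_funS measurableT (@subsetT _ D) mF.
  rewrite AU ge0_integral_setU //; first last.
  - apply/eqP; apply/seteqP; split => w //= [[[Ew Hw]|[Ew Hw]] [_ Hw']]; move: Hw Hw'; rewrite /BR /BC /BN /=.
      by move=> Ha /andP [Hl _]; move: (le_lt_trans Ha (le_lt_trans al' Hl)); rewrite ltxx.
    by move=> /andP [_ Ha] /andP [Hl _]; move: (le_lt_trans Ha Hl); rewrite ltxx.
  - by move=> w _; rewrite lee_fin.
  - by apply: measurableU.
  rewrite ge0_integral_setU //.
  - by move=> w _; rewrite lee_fin.
  - apply/eqP; apply/seteqP; split => w //= [[Ew Hw] [_ Hw']]; move: Hw Hw'; rewrite /BR /BC /=.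
    by move=> Ha /andP [Hl _]; move: (le_lt_trans Ha Hl); rewrite ltxx.
have Gge1 : forall w, 1 <= G w by move=> w; rewrite /G le_max lexx orbT.
have Gpos : forall w, 0 < G w by move=> w; apply: lt_le_trans ltr01 (Gge1 w).
have al0 : forall w, 0 <= al w by move=> w; case/andP: (a01 (hist alpha lambda tau (p w) t)).
have tla : forall w, 0 < ta w - la w.
  by move=> w; rewrite subr_gt0; case/andP: (alt (hist alpha lambda tau (p w) t)).
have ta0 : forall w, 0 < ta w.
  move=> w; have := l01 (hist alpha lambda tau (p w) t); have := alt (hist alpha lambda tau (p w) t).
  case/andP => _ H1 /andP [H2 _]; exact: le_lt_trans H2 H1.
have F1ge0 : forall w, 0 <= al w * ((la w < X t w <= ta w)%R : bool)%:R / ((ta w - la w) * G w).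
  by move=> w; rewrite divr_ge0 ?mulr_ge0 ?ler0n // ltW // mulr_gt0.
have F2ge0 : forall w, 0 <= al w / (ta w * G w).
  by move=> w; rewrite divr_ge0 // ltW // mulr_gt0.
have F3ge0 : forall w, 0 <= ((X t w <= al w)%R : bool)%:R / G w.
  by move=> w; rewrite divr_ge0 ?ler0n // ltW.
have mF1 : measurable_fun setT
    (fun w => al w * ((la w < X t w <= ta w)%R : bool)%:R / ((ta w - la w) * G w)).
  pose Psi := fun H : history => alpha (take t H) *
     ((~~ (nth (false, false, false) H t).1.2 && (nth (false, false, false) H t).2) : bool)%:R /
     ((tau (take t H) - lambda (take t H)) *
       Num.max (g [ffun i : 'I_T => (nth (false, false, false) H i).1.1]) 1).
  rewrite (_ : (fun w => _) = (fun w => Psi (hist alpha lambda tau (fun i => X i w) T)));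
    first exact: (measurable_hist X alpha lambda tau T Psi).
  rewrite /Psi.
  apply: funext => w /=; rewrite take_hist ?(ltnW Ht) // nth_hist //.
  by rewrite -(Rvec_hist _ _ _ _ _ (false, false, false)) /= ltNge.
have mF2 : measurable_fun setT (fun w => al w / (ta w * G w)).
  pose Psi := fun H : history => alpha (take t H) / (tau (take t H) *
       Num.max (g [ffun i : 'I_T => (nth (false, false, false) H i).1.1]) 1).
  rewrite (_ : (fun w => _) = (fun w => Psi (hist alpha lambda tau (fun i => X i w) T)));
    first exact: (measurable_hist X alpha lambda tau T Psi).
  rewrite /Psi.
  apply: funext => w /=; rewrite take_hist ?(ltnW Ht) //.
  by rewrite -(Rvec_hist _ _ _ _ _ (false, false, false)).
have mF3 : measurable_fun setT (fun w => ((X t w <= al w)%R : bool)%:R / G w).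
  pose Psi := fun H : history => ((nth (false, false, false) H t).1.1 : bool)%:R /
       Num.max (g [ffun i : 'I_T => (nth (false, false, false) H i).1.1]) 1.
  rewrite (_ : (fun w => _) = (fun w => Psi (hist alpha lambda tau (fun i => X i w) T)));
    first exact: (measurable_hist X alpha lambda tau T Psi).
  rewrite /Psi.
  apply: funext => w /=; rewrite nth_hist //.
  by rewrite -(Rvec_hist _ _ _ _ _ (false, false, false)).
have trR : forall w, BR (X t w) -> trip alpha lambda tau (X t w) h = trip alpha lambda tau 0 h.
  move=> w /= Hx; rewrite /trip -/a -/l -/u Hx (le_trans Hx al').
  by rewrite (le_trans Hx (le_trans al' (ltW lu))) a0 l0 (ltW u0).
have trC : forall w, BC (X t w) -> trip alpha lambda tau (X t w) h = trip alpha lambda tau l h.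
  move=> w /= /andP [Ha Hl]; rewrite /trip -/a -/l -/u (lt_geF Ha) Hl (le_trans Hl (ltW lu)).
  by rewrite (lt_geF (lt_le_trans Ha Hl)) lexx (ltW lu).
have trN : forall w, BN (X t w) -> trip alpha lambda tau (X t w) h = trip alpha lambda tau u h.
  move=> w /= /andP [Hl Hu]; rewrite /trip -/a -/l -/u (lt_geF (le_lt_trans al' Hl)) (lt_geF Hl) Hu.
  by rewrite (lt_geF (le_lt_trans al' lu)) (lt_geF lu) lexx.
set V := fun x => (\int[P]_(w in E) (Phi (hist alpha lambda tau (px X t x w) T))%:E)%E.
have I1 : (\int[P]_(w in A)
   (al w * ((la w < X t w <= ta w)%R : bool)%:R / ((ta w - la w) * G w))%:E =
   0%R%:E * (P (X t @^-1` BR) * V 0%R) + 0%R%:E * (P (X t @^-1` BC) * V l)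
   + (a / (u - l))%R%:E * (P (X t @^-1` BN) * V u))%E.
  rewrite split3 //; congr (_ + _ + _)%E.
  - apply: (piece P X alpha lambda tau T t 0 h BR Phi 0) => // w Ew Bw.
    have [ha [hl hu]] := onE w Ew.
    by rewrite hl hu (le_gtF (le_trans Bw al')) mulr0 !mul0r.
  - apply: (piece P X alpha lambda tau T t l h BC Phi 0) => // w Ew Bw.
    have [ha [hl hu]] := onE w Ew; case/andP: Bw => _ Bw.
    by rewrite hl hu (le_gtF Bw) mulr0 !mul0r.
  - apply: (piece P X alpha lambda tau T t u h BN Phi (a / (u - l))) => //.
      by rewrite divr_ge0 // subr_ge0 ltW.
    move=> w Ew Bw; have [ha [hl hu]] := onE w Ew.
    rewrite ha hl hu; case/andP: (Bw) => -> ->; rewrite mulr1 -(agree u w Ew (trN w Bw)) -GPhi.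
    by rewrite invfM mulrA.
have I2 : (\int[P]_(w in A) (al w / (ta w * G w))%:E =
   (a / u)%R%:E * (P (X t @^-1` BR) * V 0%R) + (a / u)%R%:E * (P (X t @^-1` BC) * V l)
   + (a / u)%R%:E * (P (X t @^-1` BN) * V u))%E.
  have c0 : 0 <= a / u by rewrite divr_ge0 // ltW.
  rewrite split3 //; congr (_ + _ + _)%E.
  - apply: (piece P X alpha lambda tau T t 0 h BR Phi (a / u)) => // w Ew Bw.
    have [ha [hl hu]] := onE w Ew.
    by rewrite ha hu -(agree 0 w Ew (trR w Bw)) -GPhi invfM mulrA.
  - apply: (piece P X alpha lambda tau T t l h BC Phi (a / u)) => // w Ew Bw.
    have [ha [hl hu]] := onE w Ew.
    by rewrite ha hu -(agree l w Ew (trC w Bw)) -GPhi invfM mulrA.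
  - apply: (piece P X alpha lambda tau T t u h BN Phi (a / u)) => // w Ew Bw.
    have [ha [hl hu]] := onE w Ew.
    by rewrite ha hu -(agree u w Ew (trN w Bw)) -GPhi invfM mulrA.
have I3 : (\int[P]_(w in A) (((X t w <= al w)%R : bool)%:R / G w)%:E =
   1%R%:E * (P (X t @^-1` BR) * V 0%R) + 0%R%:E * (P (X t @^-1` BC) * V l)
   + 0%R%:E * (P (X t @^-1` BN) * V u))%E.
  rewrite split3 //; congr (_ + _ + _)%E.
  - apply: (piece P X alpha lambda tau T t 0 h BR Phi 1) => // w Ew Bw.
    have [ha [hl hu]] := onE w Ew.
    by rewrite ha Bw -(agree 0 w Ew (trR w Bw)) -GPhi /= !mul1r.
  - apply: (piece P X alpha lambda tau T t l h BC Phi 0) => // w Ew Bw.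
    have [ha [hl hu]] := onE w Ew; case/andP: Bw => Bw _.
    by rewrite ha (lt_geF Bw) !mul0r.
  - apply: (piece P X alpha lambda tau T t u h BN Phi 0) => // w Ew Bw.
    have [ha [hl hu]] := onE w Ew; case/andP: Bw => Bw _.
    by rewrite ha (lt_geF (le_lt_trans al' Bw)) !mul0r.
have Vle : forall x y, 0 <= x -> x <= y -> y <= u -> (V x <= V y)%E.
  move=> x y x0 xy yu; apply: ge0_le_integral => //.
  - by move=> w _; rewrite lee_fin Phi0.
  - exact/measurable_EFinP/measurable_phi.
  - exact/measurable_EFinP/measurable_phi.
  move=> w Ew; rewrite lee_fin /Phi -!(Rvec_hist _ _ _ _ _ (false, false, false)).
  have Hg : g (Rvec alpha lambda tau (px X t y w) T) <= g (Rvec alpha lambda tau (px X t x w) T).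
    apply: gmono; apply: (Rvec_mono alpha lambda tau _ _ t T Ma Ml Mt).
    - by move=> i /negbTE Hi; rewrite /px Hi.
    - by rewrite /px eqxx.
    - by rewrite -(hist_px X alpha lambda tau t y w) Ew /px eqxx.
  have mp : forall b : {ffun 'I_T -> bool}, 0 < Num.max (g b) 1.
    by move=> b; apply: lt_le_trans ltr01 _; rewrite le_max lexx orbT.
  rewrite lef_pV2 ?posrE ?mp //.
  rewrite ge_max; apply/andP; split; last by rewrite le_max lexx orbT.
  by apply: le_trans Hg _; rewrite le_max lexx.
have PE1 : (P E <= 1)%E by apply: probability_le1.
have Vfin : forall x, V x \is a fin_num.
  move=> x; rewrite ge0_fin_numE; last by apply: integral_ge0 => w _; rewrite lee_fin.
  have : (V x <= \int[P]_(w in E) (cst 1%E w))%E.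
    apply: ge0_le_integral => //.
    - by move=> w _; rewrite lee_fin.
    - exact/measurable_EFinP/measurable_phi.
    - move=> w Ew; rewrite /= lee_fin /Phi invf_le1; first by rewrite le_max lexx orbT.
      by apply: lt_le_trans ltr01 _; rewrite le_max lexx orbT.
  rewrite integral_cst // mul1e => HV.
  by apply: le_lt_trans HV (le_lt_trans PE1 (ltry 1)).
have qfin : forall B, measurable B -> P (X t @^-1` B) \is a fin_num.
  move=> B mB; rewrite ge0_fin_numE ?measure_ge0 //.
  exact: le_lt_trans (probability_le1 _ (mpre _ mB)) (ltry 1).
have Pind : forall B, measurable B -> P (E `&` X t @^-1` B) = (P (X t @^-1` B) * P E)%E.
  move=> B mB.
  have := key_indep P X alpha lambda tau T t 0 h B (fun _ => 1) mX MI Ht Hh mB (fun _ => ler01).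
  rewrite /= -/E.
  rewrite (_ : (\int[P]_(w in E `&` X t @^-1` B) 1%:E)%E = \int[P]_(w in E `&` X t @^-1` B) (cst 1%E w))%E //.
  rewrite (_ : (\int[P]_(w in E) 1%:E)%E = \int[P]_(w in E) (cst 1%E w))%E //.
  by rewrite !integral_cst // ?mul1e //; apply: measurableI => //; apply: mpre.
have mle : forall c : R, measurable [set y : R | y <= c].
  move=> c; rewrite (_ : [set y | y <= c] = [set` `]-oo, c]]); first exact: measurable_itv.
  by apply/seteqP; split => y /=; rewrite in_itv.
have pfin : forall S, measurable S -> P S \is a fin_num.
  move=> S mS; rewrite ge0_fin_numE ?measure_ge0 //.
  exact: le_lt_trans (probability_le1 _ mS) (ltry 1).
set f := fun c : R => fine (P (E `&` X t @^-1` [set y : R | y <= c])).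
have mEc : forall c, measurable (E `&` X t @^-1` [set y : R | y <= c]).
  by move=> c; apply: measurableI => //; apply: mpre.
have fmono : forall x y, x <= y -> f x <= f y.
  move=> x y xy; rewrite /f; apply: fine_le; rewrite ?pfin //.
  apply: le_measure; rewrite ?inE //.
  by move=> w /= [Ew Hw]; split => //; apply: le_trans xy.
have f01 : forall x, 0 <= f x <= 1.
  move=> x; rewrite /f fine_ge0 ?measure_ge0 //=.
  rewrite -[1]/(fine 1%E); apply: fine_le; rewrite ?pfin //.
  exact: probability_le1.
have fratio : forall x t0, 0 < x < 1 -> 0 < t0 < 1 -> 0 < f t0 -> f (x * t0) <= x * f t0.
  move=> x t0 Hx Ht0 ft0.
  have Pt0 : (0 < P (E `&` X t @^-1` [set y : R | (y <= t0)%R]))%E.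
    rewrite lt_neqAle measure_ge0 andbT; apply/eqP => Hz; move: ft0; by rewrite /f -Hz ltxx.
  have := CUC x t0 Hx Ht0 h Pt0; rewrite /cprob.
  case/andP: Hx => x0 x1; case/andP: Ht0 => t00 t0lt1.
  rewrite (_ : hist_event alpha lambda tau X t h `&` [set w | X t w <= t0] `&`
     [set w | X t w / t0 <= x] = E `&` X t @^-1` [set y : R | y <= x * t0]); last first.
    apply/seteqP; split => w /=.
      by move=> [[Ew _] Hw]; split => //; rewrite -ler_pdivrMr.
    move=> [Ew Hw]; split; last by rewrite ler_pdivrMr.
    split => //; apply: le_trans Hw _; rewrite ler_piMl ?(ltW t00) ?(ltW x1) //.
  rewrite -(fineK (pfin _ (mEc (x * t0)))) -EFinM lee_fin -/(f (x * t0)).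
  by rewrite (_ : fine (P _) = f t0) // ler_pdivrMr // mulrC.
have Hcons := cons_aux f fmono f01 fratio.
have PEpos : (0 < P E)%E.
  apply: (lt_le_trans PA); apply: le_measure; rewrite ?inE.
  - rewrite AE; apply: measurableI => //; exact: mpre (mle u).
  - exact: mE.
  - by rewrite AE => w [].
have pE0 : 0 < fine (P E) by apply: fine_gt0; rewrite PEpos /=; apply: le_lt_trans PE1 (ltry 1).
set Q := fun c : R => fine (P (X t @^-1` [set y : R | y <= c])).
have fQ : forall c, f c = Q c * fine (P E).
  by move=> c; rewrite /f /Q Pind ?mle // fineM ?qfin ?mle ?pfin.
have C1 : u * Q l <= l * Q u.
  have := Hcons l u; rewrite l0 (ltW lu) u0 u1 !fQ !mulrA => /(_ isT isT).
  by rewrite ler_pM2r.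
have C2 : u * Q a <= a * Q u.
  have := Hcons a u; rewrite a0 (le_trans al' (ltW lu)) u0 u1 !fQ !mulrA => /(_ isT isT).
  by rewrite ler_pM2r.
set rR := fine (P (X t @^-1` BR)).
set rC := fine (P (X t @^-1` BC)).
set rN := fine (P (X t @^-1` BN)).
have mXR := mpre _ mBR.
have mXC := mpre _ mBC.
have mXN := mpre _ mBN.
have mXl := mpre _ (mle l).
have QR : Q a = rR by [].
have QC : Q l = rR + rC.
  rewrite /Q /rR /rC -fineD ?qfin //; congr fine.
  rewrite -measureU //; first congr (P _).
    apply/seteqP; split => w /=.
      by move=> Hw; case: (leP (X t w) a) => Ha; [left|right; rewrite /BC /= Ha].
    by move=> [Hw|/andP [_ Hw]] //; apply: le_trans Hw al'.
  apply/seteqP; split => w //= [Hw /andP [Hw' _]]; move: (le_lt_trans Hw Hw'); by rewrite ltxx.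
have QN : Q u = rR + rC + rN.
  rewrite -QC /Q /rN -fineD ?qfin ?pfin ?mpre //; congr fine.
  rewrite -measureU //; first congr (P _).
    apply/seteqP; split => w /=.
      by move=> Hw; case: (leP (X t w) l) => Hl; [left|right; rewrite /BN /= Hl].
    by move=> [Hw|/andP [_ Hw]] //; apply: le_trans Hw (ltW lu).
  apply/seteqP; split => w //= [Hw /andP [Hw' _]]; move: (le_lt_trans Hw Hw'); by rewrite ltxx.
have V0 : 0 <= fine (V 0%R) by apply: fine_ge0; apply: integral_ge0 => w _; rewrite lee_fin.
have V01 : fine (V 0%R) <= fine (V l) by apply: fine_le; rewrite ?Vfin //; apply: Vle => //; apply: ltW.
have V12 : fine (V l) <= fine (V u) by apply: fine_le; rewrite ?Vfin //; apply: Vle => //; apply: ltW.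
have C1' : u * (rR + rC) <= l * (rR + rC + rN) by rewrite -QN -QC.
have C2' : u * rR <= a * (rR + rC + rN) by rewrite -QN -QR.
have [FI1 FI2] := final_ineq _ _ _ _ _ _ _ _ _ a0 al' lu l0 (fine_ge0 (measure_ge0 _ _)) (fine_ge0 (measure_ge0 _ _))
  (fine_ge0 (measure_ge0 _ _)) V0 V01 V12 C1' C2'.
rewrite /cexp I1 I2 I3.
rewrite -(fineK (qfin _ mBR)) -(fineK (qfin _ mBC)) -(fineK (qfin _ mBN)).
rewrite -(fineK (Vfin 0%R)) -(fineK (Vfin l)) -(fineK (Vfin u)).
rewrite -!EFinM.
have k0 : 0 <= (fine (P A))^-1 by rewrite invr_ge0 fine_ge0 // measure_ge0.
by rewrite !lee_fin; split; apply: ler_wpM2r.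
Qed.
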